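(* Let $u$ be the solution of the Cauchy problem in the context and let $X(x,t)$ be the value at time $t$ of the solution of the quasispecies equation \[ \dot y=-\sigma y(1-y)+m_0f_0(1-y)-m_1f_1y,\qquad y(0)=x. \] Then $1\ge u(x,t)\ge X(x,t)$ for all $0\le x\le1$ and $t\ge0$.
   Context: Constants: $f_0>0$, $f_1\ge0$ with $\sigma=f_0-f_1>0$; $\lambda_0,\lambda_1\ge0$; $\gamma_0,\gamma_1\in(0,1]$; $m_0=\lambda_0\gamma_0$, $m_1=\lambda_1\gamma_1$. With $\mathcal{J}_0u(x,t)=u(x+\gamma_0(1-x),t)-u(x,t)$ and $\mathcal{J}_1u(x,t)=u(x-\gamma_1x,t)-u(x,t)$, $u$ is the unique (mild) solution, which is $C^\infty$ on $[0,1]\times[0,\infty)$, of \[ \partial_tu+\sigma(1-x)x\,\partial_xu=\lambda_0f_0\mathcal{J}_0u+\lambda_1f_1\mathcal{J}_1u\ (0\le x\le1,\ t>0),\quad u(x,0)=x. \] ($u(x,t)$ is the expected frequency of species 1 under rare mutations.) *)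

(* Defs.v *)
From Stdlib Require Import Reals.
From Coquelicot Require Import Coquelicot.
Open Scope R_scope.

Definition d_t (u : R -> R -> R) (x t : R) : R := Derive (fun s => u x s) t.
Definition d_x (u : R -> R -> R) (x t : R) : R := Derive (fun y => u y t) x.

Definition J0 (g0 : R) (u : R -> R -> R) (x t : R) : R :=
  u (x + g0 * (1 - x)) t - u x t.
Definition J1 (g1 : R) (u : R -> R -> R) (x t : R) : R :=
  u (x - g1 * x) t - u x t.

(* u is C^1 on the closed strip [0,1] x [0,oo): jointly continuous there,
   both partial derivatives exist there (for the function on R x R, i.e. for
   some extension) and are jointly continuous there. *)
Definition C1_on_strip (u : R -> R -> R) : Prop :=
  forall x t, 0 <= x <= 1 -> 0 <= t ->
    continuous (fun p : R * R => u (fst p) (snd p)) (x, t) /\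
    ex_derive (fun s => u x s) t /\
    ex_derive (fun y => u y t) x /\
    continuous (fun p : R * R => d_t u (fst p) (snd p)) (x, t) /\
    continuous (fun p : R * R => d_x u (fst p) (snd p)) (x, t).

Definition solves_cauchy (f0 f1 l0 l1 g0 g1 : R) (u : R -> R -> R) : Prop :=
  C1_on_strip u /\
  (forall x t, 0 <= x <= 1 -> 0 < t ->
     d_t u x t + (f0 - f1) * (1 - x) * x * d_x u x t
     = l0 * f0 * J0 g0 u x t + l1 * f1 * J1 g1 u x t) /\
  (forall x, 0 <= x <= 1 -> u x 0 = x).

(* Right-hand side of the quasispecies equation, with sigma = f0 - f1,
   m0 = l0 g0, m1 = l1 g1. *)
Definition qs_rhs (f0 f1 l0 l1 g0 g1 : R) (y : R) : R :=
  - (f0 - f1) * y * (1 - y) + (l0 * g0) * f0 * (1 - y) - (l1 * g1) * f1 * y.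

Definition solves_quasispecies (f0 f1 l0 l1 g0 g1 : R) (X : R -> R -> R) : Prop :=
  forall x, 0 <= x <= 1 ->
    X x 0 = x /\
    forall t, 0 <= t -> is_derive (X x) t (qs_rhs f0 f1 l0 l1 g0 g1 (X x t)).

(* Main.v *)
Require Import Defs.
From Stdlib Require Import Reals Lra Psatz Classical ClassicalEpsilon.
From Coquelicot Require Import Coquelicot.
Open Scope R_scope.


Definition cont2 (f : R -> R -> R) (x t : R) : Prop :=
  continuous (fun p : R * R => f (fst p) (snd p)) (x, t).

Lemma cont2_eps f x t : cont2 f x t -> forall eps, 0 < eps ->
  exists d, 0 < d /\ forall y s, Rabs (y - x) < d -> Rabs (s - t) < d ->
    Rabs (f y s - f x t) < eps.
Proof.
  intros H eps He.
  destruct (proj1 (filterlim_locally _ _) H (mkposreal eps He)) as [d Hd].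
  exists d; split; [apply cond_pos|].
  intros y s Hy Hs.
  specialize (Hd (y, s)). simpl in Hd.
  apply Hd. split; assumption.
Qed.

Lemma deriv_left_min g t l : is_derive g t l -> 0 < t ->
  (forall s, 0 <= s <= t -> g t <= g s) -> l <= 0.
Proof.
  intros Hd Ht Hmin.
  apply is_derive_Reals in Hd.
  destruct (Rle_or_lt l 0) as [|Hl]; [assumption|exfalso].
  destruct (Hd l Hl) as [d Hdd].
  set (h := - Rmin (d/2) t).
  assert (Hh1 : 0 < Rmin (d/2) t) by (apply Rmin_pos; [destruct d; simpl; lra| lra]).
  assert (Hh2 : Rmin (d/2) t <= d/2) by apply Rmin_l.
  assert (Hh3 : Rmin (d/2) t <= t) by apply Rmin_r.
  assert (Hd0 : 0 < d) by (destruct d; simpl; lra).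
  specialize (Hdd h).
  assert (h <> 0) by (unfold h; lra).
  assert (Rabs h < d) by (unfold h; rewrite Rabs_Ropp, Rabs_pos_eq; lra).
  specialize (Hdd H H0).
  assert (Hq : (g (t + h) - g t) / h <= 0).
  { assert (g t <= g (t+h)) by (apply Hmin; unfold h; lra).
    unfold Rdiv. assert (/ h < 0) by (apply Rinv_lt_0_compat; unfold h; lra).
    nra. }
  apply Rabs_def2 in Hdd. lra.
Qed.

Lemma deriv_right_min g t l : is_derive g t l -> t < 1 ->
  (forall s, t <= s <= 1 -> g t <= g s) -> 0 <= l.
Proof.
  intros Hd Ht Hmin.
  apply is_derive_Reals in Hd.
  destruct (Rle_or_lt 0 l) as [|Hl]; [assumption|exfalso].
  destruct (Hd (-l) ltac:(lra)) as [d Hdd].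
  set (h := Rmin (d/2) (1 - t)).
  assert (Hd0 : 0 < d) by (destruct d; simpl; lra).
  assert (Hh1 : 0 < h) by (apply Rmin_pos; lra).
  assert (Hh2 : h <= d/2) by apply Rmin_l.
  assert (Hh3 : h <= 1 - t) by apply Rmin_r.
  specialize (Hdd h).
  assert (h <> 0) by lra.
  assert (Rabs h < d) by (rewrite Rabs_pos_eq; lra).
  specialize (Hdd H H0).
  assert (Hq : 0 <= (g (t + h) - g t) / h).
  { assert (g t <= g (t+h)) by (apply Hmin; lra).
    unfold Rdiv. assert (0 < / h) by (apply Rinv_0_lt_compat; lra).
    nra. }
  apply Rabs_def2 in Hdd. lra.
Qed.

Lemma deriv_left_min' g t l a : is_derive g t l -> a < t ->
  (forall s, a <= s <= t -> g t <= g s) -> l <= 0.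
Proof.
  intros Hd Ht Hmin.
  apply is_derive_Reals in Hd.
  destruct (Rle_or_lt l 0) as [|Hl]; [assumption|exfalso].
  destruct (Hd l Hl) as [d Hdd].
  set (h := - Rmin (d/2) (t - a)).
  assert (Hd0 : 0 < d) by (destruct d; simpl; lra).
  assert (Hh1 : 0 < Rmin (d/2) (t-a)) by (apply Rmin_pos; lra).
  assert (Hh2 : Rmin (d/2) (t-a) <= d/2) by apply Rmin_l.
  assert (Hh3 : Rmin (d/2) (t-a) <= t-a) by apply Rmin_r.
  specialize (Hdd h).
  assert (h <> 0) by (unfold h; lra).
  assert (Rabs h < d) by (unfold h; rewrite Rabs_Ropp, Rabs_pos_eq; lra).
  specialize (Hdd H H0).
  assert (Hq : (g (t + h) - g t) / h <= 0).
  { assert (g t <= g (t+h)) by (apply Hmin; unfold h; lra).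
    unfold Rdiv. assert (/ h < 0) by (apply Rinv_lt_0_compat; unfold h; lra).
    nra. }
  apply Rabs_def2 in Hdd. lra.
Qed.

Lemma cont_pt_of f x : (forall eps, 0 < eps -> exists d, 0 < d /\
   forall y, Rabs (y - x) < d -> Rabs (f y - f x) < eps) -> continuity_pt f x.
Proof.
  intros H eps He. destruct (H eps He) as [d [Hd Hy]].
  exists d; split; [lra|]. intros y [_ Hy']. apply Hy. exact Hy'.
Qed.

Lemma lsc_strip v T t L eps : 0 <= t <= T ->
  (forall x s, 0 <= x <= 1 -> 0 <= s <= T -> cont2 v x s) ->
  (forall y, 0 <= y <= 1 -> L <= v y t) -> 0 < eps ->
  exists d, 0 < d /\ forall y s, 0 <= y <= 1 -> Rabs (s - t) < d -> L - eps < v y s.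
Proof.
  intros Ht Hc HL He.
  assert (loc : forall x, 0 <= x <= 1 -> exists d, 0 < d /\ forall y s,
     Rabs (y - x) < d -> Rabs (s - t) < d -> L - eps < v y s).
  { intros x Hx. destruct (cont2_eps _ _ _ (Hc x t Hx Ht) eps He) as [d [Hd H]].
    exists d; split; [lra|]. intros y s Hy Hs. specialize (H y s Hy Hs).
    specialize (HL x Hx). apply Rabs_def2 in H. lra. }
  set (E := fun a => 0 <= a <= 1 /\ exists d, 0 < d /\ forall y s, 0 <= y <= a ->
       Rabs (s - t) < d -> L - eps < v y s).
  assert (HE0 : E 0).
  { destruct (loc 0 ltac:(lra)) as [d [Hd H]]. split; [lra|]. exists d; split; [lra|].
    intros y s Hy Hs. apply H; [|lra]. replace (y - 0) with 0 by lra. rewrite Rabs_R0; lra. }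
  assert (Hb : bound E) by (exists 1; intros a [Ha _]; lra).
  destruct (completeness E Hb (ex_intro _ 0 HE0)) as [as_ [Hub Hlub]].
  assert (Has0 : 0 <= as_) by (apply Hub; exact HE0).
  assert (Has1 : as_ <= 1) by (apply Hlub; intros a [Ha _]; lra).
  destruct (loc as_ ltac:(lra)) as [ds [Hds Hloc]].
  assert (Hex : exists a, E a /\ as_ - ds < a).
  { apply NNPP. intro Hn.
    assert (as_ <= as_ - ds).
    { apply Hlub. intros a Ea. destruct (Rle_or_lt a (as_ - ds)) as [|Hlt]; [assumption|].
      exfalso; apply Hn; exists a; split; assumption. }
    lra. }
  destruct Hex as [a [[Ha [da [Hda Hea]]] Hlt]].
  set (a' := Rmin 1 (as_ + ds/2)).
  assert (Ea' : E a').
  { split. { unfold a'. split; [apply Rmin_glb; lra| apply Rmin_l]. }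
    exists (Rmin da ds). split; [apply Rmin_pos; lra|].
    intros y s Hy Hs.
    assert (H1 : Rmin da ds <= da) by apply Rmin_l.
    assert (H2 : Rmin da ds <= ds) by apply Rmin_r.
    assert (H3 : a' <= as_ + ds/2) by apply Rmin_r.
    destruct (Rle_or_lt y a) as [Hya|Hya].
    - apply Hea; lra.
    - apply Hloc; [|lra]. apply Rabs_def1; lra. }
  assert (a' <= as_) by (apply Hub; exact Ea').
  assert (Ha'1 : a' = 1).
  { unfold a' in *. destruct (Rle_or_lt 1 (as_ + ds/2)).
    - apply Rmin_left; assumption.
    - rewrite Rmin_right in H; lra. }
  rewrite Ha'1 in Ea'. destruct Ea' as [_ [d [Hd Hf]]].
  exists d; split; [assumption|]. intros y s Hy Hs. apply Hf; lra.
Qed.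

Definition clamp (T t : R) := Rmax 0 (Rmin T t).

Lemma clamp_in T t : 0 <= T -> 0 <= clamp T t <= T.
Proof. intros. unfold clamp, Rmax, Rmin. repeat destruct Rle_dec; lra. Qed.

Lemma clamp_id T t : 0 <= t <= T -> clamp T t = t.
Proof. intros. unfold clamp, Rmax, Rmin. repeat destruct Rle_dec; lra. Qed.

Lemma clamp_lip T t t0 : 0 <= T -> Rabs (clamp T t - clamp T t0) <= Rabs (t - t0).
Proof.
  intros. unfold clamp, Rmax, Rmin.
  repeat destruct Rle_dec; unfold Rabs; repeat destruct Rcase_abs; lra.
Qed.

Lemma min2 v T : 0 <= T ->
  (forall x s, 0 <= x <= 1 -> 0 <= s <= T -> cont2 v x s) ->
  exists xs ts, 0 <= xs <= 1 /\ 0 <= ts <= T /\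
    forall x s, 0 <= x <= 1 -> 0 <= s <= T -> v xs ts <= v x s.
Proof.
  intros HT Hc.
  assert (Hx : forall t, exists x, 0 <= x <= 1 /\ forall y, 0 <= y <= 1 ->
            v x (clamp T t) <= v y (clamp T t)).
  { intros t. destruct (continuity_ab_min (fun y => v y (clamp T t)) 0 1 ltac:(lra))
      as [mx [H1 H2]].
    - intros c Hc'. apply cont_pt_of. intros eps He.
      destruct (cont2_eps _ _ _ (Hc c (clamp T t) Hc' (clamp_in T t HT)) eps He) as [d [Hd H]].
      exists d; split; [lra|]. intros y Hy. apply H; [assumption|].
      replace (clamp T t - clamp T t) with 0 by lra. rewrite Rabs_R0; lra.
    - exists mx; split; [assumption|]. intros; apply H1; assumption. }
  set (xm := fun t => proj1_sig (constructive_indefinite_description _ (Hx t))).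
  assert (Hxm : forall t, 0 <= xm t <= 1 /\ forall y, 0 <= y <= 1 ->
            v (xm t) (clamp T t) <= v y (clamp T t)).
  { intros t. unfold xm. destruct constructive_indefinite_description; simpl; assumption. }
  set (M := fun t => v (xm t) (clamp T t)).
  destruct (continuity_ab_min M 0 T HT) as [ts [Hts2 Hts1]].
  - intros t0 _. apply cont_pt_of. intros eps He.
    set (tau := clamp T t0).
    assert (Htau : 0 <= tau <= T) by apply clamp_in, HT.
    destruct (Hxm t0) as [Hx0 Hmin0].
    destruct (lsc_strip v T tau (M t0) eps Htau Hc) as [d1 [Hd1 Hl]]; [|assumption|].
    { intros y Hy. apply Hmin0; assumption. }
    destruct (cont2_eps _ _ _ (Hc _ _ Hx0 Htau) eps He) as [d2 [Hd2 Hu]].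
    exists (Rmin d1 d2); split; [apply Rmin_pos; assumption|].
    intros t Ht.
    assert (Hcl := clamp_lip T t t0 HT).
    assert (Rmin d1 d2 <= d1) by apply Rmin_l.
    assert (Rmin d1 d2 <= d2) by apply Rmin_r.
    destruct (Hxm t) as [Hx1 Hmin1].
    assert (L1 : M t0 - eps < M t).
    { unfold M. apply Hl; [assumption|]. fold tau in Hcl. lra. }
    assert (L2 : M t <= v (xm t0) (clamp T t)).
    { unfold M. apply Hmin1; assumption. }
    assert (L3 : Rabs (v (xm t0) (clamp T t) - v (xm t0) tau) < eps).
    { apply Hu; [|fold tau in Hcl; lra]. replace (xm t0 - xm t0) with 0 by lra.
      rewrite Rabs_R0; lra. }
    apply Rabs_def2 in L3. unfold M in *. unfold tau in *. apply Rabs_def1; lra.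
  - exists (xm ts), ts. destruct (Hxm ts) as [Hx1 _].
    split; [assumption|]. split; [assumption|].
    intros x s Hx' Hs.
    specialize (Hts2 s Hs). unfold M in Hts2.
    rewrite (clamp_id T ts Hts1), (clamp_id T s Hs) in Hts2.
    destruct (Hxm s) as [_ Hm]. specialize (Hm x Hx').
    rewrite (clamp_id T s Hs) in Hm. lra.
Qed.

Lemma cont2_add_t w c x t : cont2 w x t -> cont2 (fun x t => w x t + c * (1 + t)) x t.
Proof.
  unfold cont2. intros H.
  apply (continuous_plus (fun p : R*R => w (fst p) (snd p)) (fun p : R*R => c * (1 + snd p))); [exact H|].
  apply (continuous_mult (fun _ : R*R => c) (fun p : R*R => 1 + snd p)).
  - apply continuous_const.
  - apply (continuous_plus (fun _ : R*R => 1) (fun p : R*R => snd p)).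
    + apply continuous_const.
    + apply continuous_snd.
Qed.

Lemma maxp (sg a0 a1 g0 g1 : R) (w : R -> R -> R) :
  0 <= a0 -> 0 <= a1 -> 0 <= g0 <= 1 -> 0 <= g1 <= 1 ->
  (forall x t, 0 <= x <= 1 -> 0 <= t -> cont2 w x t) ->
  (forall x t, 0 <= x <= 1 -> 0 < t -> exists wt wx : R,
     is_derive (fun s => w x s) t wt /\ is_derive (fun y => w y t) x wx /\
     0 <= wt + sg * (1 - x) * x * wx - a0 * (w (x + g0 * (1 - x)) t - w x t)
            - a1 * (w (x - g1 * x) t - w x t)) ->
  (forall x, 0 <= x <= 1 -> 0 <= w x 0) ->
  forall x t, 0 <= x <= 1 -> 0 <= t -> 0 <= w x t.
Proof.
  intros Ha0 Ha1 Hg0 Hg1 Hc Hpde Hinit x0 t0 Hx0 Ht0.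
  apply Rnot_lt_le. intro Hneg.
  set (eps := - w x0 t0 / (2 * (1 + t0))).
  assert (Heps : 0 < eps).
  { unfold eps. apply Rdiv_lt_0_compat; lra. }
  set (v := fun x t => w x t + eps * (1 + t)).
  assert (Hv0 : v x0 t0 < 0).
  { unfold v, eps. replace (- w x0 t0 / (2 * (1 + t0)) * (1 + t0)) with (- w x0 t0 / 2) by (field; lra). lra. }
  destruct (min2 v t0 Ht0) as [xs [ts [Hxs [Hts Hmin]]]].
  { intros x s Hx Hs. apply cont2_add_t, Hc; lra. }
  assert (Hvs : v xs ts < 0) by (specialize (Hmin x0 t0 Hx0 ltac:(lra)); lra).
  assert (Hts0 : 0 < ts).
  { destruct (Rle_lt_or_eq_dec 0 ts (proj1 Hts)) as [|E]; [assumption|].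
    subst ts. exfalso. unfold v in Hvs. specialize (Hinit xs Hxs). nra. }
  destruct (Hpde xs ts Hxs Hts0) as [wt [wx [Hdt [Hdx Hineq]]]].
  assert (Hwt : wt + eps <= 0).
  { apply (deriv_left_min' (fun s => v xs s) ts (wt + eps) 0).
    - unfold v. apply (is_derive_plus (fun s => w xs s) (fun s => eps * (1 + s))); [exact Hdt|].
      auto_derive; [exact I| ring].
    - assumption.
    - intros s Hs. apply Hmin; lra. }
  assert (Hwmin : forall y, 0 <= y <= 1 -> w xs ts <= w y ts).
  { intros y Hy. specialize (Hmin y ts Hy Hts). unfold v in Hmin. lra. }
  assert (Hxterm : sg * (1 - xs) * xs * wx = 0).
  { destruct (Req_dec xs 0) as [->|Hn0]; [ring|].
    destruct (Req_dec xs 1) as [->|Hn1]; [ring|].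
    assert (wx <= 0).
    { apply (deriv_left_min' (fun y => w y ts) xs wx 0 Hdx); [lra|].
      intros s Hs. apply Hwmin; lra. }
    assert (0 <= wx).
    { apply (deriv_right_min (fun y => w y ts) xs wx Hdx); [lra|].
      intros s Hs. apply Hwmin; lra. }
    replace wx with 0 by lra. ring. }
  assert (J0 : 0 <= w (xs + g0 * (1 - xs)) ts - w xs ts).
  { assert (w xs ts <= w (xs + g0 * (1 - xs)) ts) by (apply Hwmin; nra). lra. }
  assert (J1 : 0 <= w (xs - g1 * xs) ts - w xs ts).
  { assert (w xs ts <= w (xs - g1 * xs) ts) by (apply Hwmin; nra). lra. }
  assert (0 <= a0 * (w (xs + g0 * (1 - xs)) ts - w xs ts)) by (apply Rmult_le_pos; assumption).
  assert (0 <= a1 * (w (xs - g1 * xs) ts - w xs ts)) by (apply Rmult_le_pos; assumption).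
  lra.
Qed.

Lemma chs_exists (q : R) : 0 <= q -> exists Ch S : R -> R,
  Ch 0 = 1 /\ S 0 = 0 /\
  (forall t, is_derive Ch t (q * S t)) /\ (forall t, is_derive S t (Ch t)) /\
  (forall t, Ch t * Ch t - q * (S t * S t) = 1) /\
  (forall t, 0 <= t -> 0 <= S t /\ 0 < Ch t).
Proof.
  intros Hq. destruct (Rle_lt_or_eq_dec 0 q Hq) as [Hq0|Hq0].
  - set (w := sqrt q).
    assert (Hw : 0 < w) by (apply sqrt_lt_R0; assumption).
    assert (Hww : w * w = q) by (apply sqrt_sqrt; lra).
    exists (fun t => (exp (w * t) + exp (- (w * t))) / 2),
           (fun t => (exp (w * t) - exp (- (w * t))) / (2 * w)).
    assert (He : forall t, exp (w * t) * exp (- (w * t)) = 1).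
    { intros t. rewrite <- exp_plus. replace (w * t + - (w * t)) with 0 by ring. apply exp_0. }
    split; [|split; [|split; [|split; [|split]]]].
    + rewrite Rmult_0_r, Ropp_0, exp_0. field.
    + rewrite Rmult_0_r, Ropp_0, exp_0. field. lra.
    + intros t. auto_derive; [exact I|]. rewrite <- Hww. field. lra.
    + intros t. auto_derive; [exact I|]. field. lra.
    + intros t. rewrite <- Hww. specialize (He t).
      rewrite <- He. field. lra.
    + intros t Ht. split.
      { assert (exp (- (w*t)) <= exp (w * t)).
      { destruct (Req_dec t 0) as [->|]. { rewrite Rmult_0_r, Ropp_0; lra. }
        left. apply exp_increasing. nra. }
      apply Rmult_le_pos; [lra|]. left. apply Rinv_0_lt_compat. lra. }
      assert (0 < exp (w*t)) by apply exp_pos.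
      assert (0 < exp (-(w*t))) by apply exp_pos. lra.
  - subst q. exists (fun _ => 1), (fun t => t).
    split; [|split; [|split; [|split; [|split]]]]; try reflexivity.
    + intros t. auto_derive; [exact I| ring].
    + intros t. auto_derive; [exact I| ring].
    + intros t. ring.
    + intros t Ht. split; lra.
Qed.

Definition Bc (sg a b : R) := - (sg + a + b).
Definition qc (sg a b : R) := Bc sg a b * Bc sg a b / 4 - sg * a.
Definition Fq (sg a b y : R) := sg * y * y + Bc sg a b * y + a.
Definition Nf (sg a b : R) (Ch S : R -> R) x t :=
  a * S t + x * (Ch t + (Bc sg a b / 2) * S t).
Definition Df (sg a b : R) (Ch S : R -> R) x t :=
  Ch t - (Bc sg a b / 2) * S t - sg * x * S t.
Definition phi sg a b Ch S x t := Nf sg a b Ch S x t / Df sg a b Ch S x t.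

Lemma qc_nonneg sg a b : 0 < sg -> 0 <= a -> 0 <= b -> 0 <= qc sg a b.
Proof.
  intros. unfold qc, Bc.
  replace (- (sg + a + b) * - (sg + a + b) / 4 - sg * a) with
    (((sg - a) * (sg - a) + b * (2 * sg + 2 * a + b)) / 4) by field.
  assert (0 <= (sg - a) * (sg - a)) by (pose proof (Rle_0_sqr (sg - a)); unfold Rsqr in *; lra).
  assert (0 <= b * (2 * sg + 2 * a + b)) by (apply Rmult_le_pos; lra).
  lra.
Qed.

Lemma Df_pos sg a b (Ch S : R -> R) x t : 0 < sg -> 0 <= a -> 0 <= b ->
  Ch t * Ch t - qc sg a b * (S t * S t) = 1 -> 0 <= S t -> 0 < Ch t ->
  0 <= x <= 1 -> 0 < Df sg a b Ch S x t.
Proof.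
  intros Hs Ha Hb Hr HS HC Hx. unfold Df.
  set (K := Bc sg a b / 2 + sg * x).
  replace (Ch t - Bc sg a b / 2 * S t - sg * x * S t) with (Ch t - K * S t) by (unfold K; ring).
  destruct (Rle_or_lt K 0) as [HK|HK].
  { assert (0 <= -K * S t) by (apply Rmult_le_pos; lra). lra. }
  assert (HK2 : K * K <= qc sg a b).
  { assert (HK1 : K <= (sg - a - b) / 2) by (unfold K, Bc; assert (sg * x <= sg * 1) by (apply Rmult_le_compat_l; lra); lra).
    assert (K * K <= (sg - a - b) / 2 * ((sg - a - b) / 2)) by (apply Rmult_le_compat; lra).
    unfold qc, Bc. 
    replace (- (sg + a + b) * - (sg + a + b) / 4 - sg * a) with
      ((sg - a - b) / 2 * ((sg - a - b) / 2) + sg * b) by field.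
    assert (0 <= sg * b) by (apply Rmult_le_pos; lra). lra. }
  assert (Hp : 0 < (Ch t - K * S t) * (Ch t + K * S t)).
  { assert (K * K * (S t * S t) <= qc sg a b * (S t * S t)).
    { apply Rmult_le_compat_r; [apply Rmult_le_pos; lra| exact HK2]. }
    replace ((Ch t - K * S t) * (Ch t + K * S t)) with (Ch t * Ch t - K * K * (S t * S t)) by ring.
    lra. }
  assert (0 < Ch t + K * S t).
  { assert (0 <= K * S t) by (apply Rmult_le_pos; lra). lra. }
  destruct (Rle_or_lt (Ch t - K * S t) 0) as [Hn|]; [|assumption].
  exfalso. assert ((Ch t - K * S t) * (Ch t + K * S t) <= 0).
  { apply Rmult_le_0_r; lra. } lra.
Qed.


Lemma phi_dt sg a b (Ch S : R -> R) x t :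
  (is_derive Ch t (qc sg a b * S t)) -> (is_derive S t (Ch t)) ->
  Ch t * Ch t - qc sg a b * (S t * S t) = 1 ->
  Df sg a b Ch S x t <> 0 ->
  is_derive (fun s => phi sg a b Ch S x s) t (Fq sg a b x / (Df sg a b Ch S x t)^2).
Proof.
  intros HC HS Hr HD.
  unfold phi, Nf, Df in *.
  auto_derive.
  - repeat split; try (eexists; eassumption); assumption.
  - replace (Derive (fun x0 : R => Ch x0) t) with (qc sg a b * S t) by (symmetry; apply is_derive_unique; exact HC).
    replace (Derive (fun x0 : R => S x0) t) with (Ch t) by (symmetry; apply is_derive_unique; exact HS).
    unfold Fq.
    match goal with |- ?L = ?R =>
      assert (E : L - R = (a + x * (Bc sg a b + sg * x)) * (Ch t * Ch t - qc sg a b * (S t * S t) - 1)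
                          / (Ch t - Bc sg a b / 2 * S t - sg * x * S t) ^ 2) end.
    { unfold qc. field. repeat split; intro Hc; apply HD; lra. }
    rewrite Hr in E. unfold Rdiv in E. rewrite Rminus_diag, Rmult_0_r, Rmult_0_l in E.
    lra.
Qed.

Lemma phi_ode sg a b (Ch S : R -> R) x t :
  Ch t * Ch t - qc sg a b * (S t * S t) = 1 ->
  Df sg a b Ch S x t <> 0 ->
  Fq sg a b x / (Df sg a b Ch S x t)^2 = Fq sg a b (phi sg a b Ch S x t).
Proof.
  intros Hr HD. unfold phi, Fq, Nf, Df in *.
  match goal with |- ?L = ?R =>
    assert (E : L - R = - (sg * x * x + Bc sg a b * x + a) * (Ch t * Ch t - qc sg a b * (S t * S t) - 1)
                        / (Ch t - Bc sg a b / 2 * S t - sg * x * S t) ^ 2) end.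
  { unfold qc. field. intro Hc; apply HD; lra. }
  rewrite Hr in E. unfold Rdiv in E. rewrite Rminus_diag, Rmult_0_r, Rmult_0_l in E.
  lra.
Qed.

Lemma phi_dx sg a b (Ch S : R -> R) x t :
  Ch t * Ch t - qc sg a b * (S t * S t) = 1 ->
  Df sg a b Ch S x t <> 0 ->
  is_derive (fun y => phi sg a b Ch S y t) x (1 / (Df sg a b Ch S x t)^2).
Proof.
  intros Hr HD.
  unfold phi, Nf, Df in *.
  auto_derive; [assumption|].
  match goal with |- ?L = ?R =>
    assert (E : L - R = (Ch t * Ch t - qc sg a b * (S t * S t) - 1)
                        / (Ch t - Bc sg a b / 2 * S t - sg * x * S t) ^ 2) end.
  { unfold qc. field. repeat split; intro Hc; apply HD; lra. }
  rewrite Hr in E. unfold Rdiv in E. rewrite Rminus_diag, Rmult_0_l in E.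
  lra.
Qed.

Lemma phi_convex sg a b (Ch S : R -> R) x y t : 0 < sg ->
  Ch t * Ch t - qc sg a b * (S t * S t) = 1 -> 0 <= S t ->
  0 < Df sg a b Ch S x t -> 0 < Df sg a b Ch S y t ->
  0 <= phi sg a b Ch S y t - phi sg a b Ch S x t - (y - x) * (1 / (Df sg a b Ch S x t)^2).
Proof.
  intros Hs Hr HS Hx Hy.
  replace (phi sg a b Ch S y t - phi sg a b Ch S x t - (y - x) * (1 / (Df sg a b Ch S x t)^2))
    with ((sg * S t) * ((y - x) * (y - x)) / (Df sg a b Ch S y t * (Df sg a b Ch S x t)^2)).
  - apply Rmult_le_pos.
    + apply Rmult_le_pos; [apply Rmult_le_pos; lra|].
      pose proof (Rle_0_sqr (y - x)); unfold Rsqr in *; lra.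
    + left. apply Rinv_0_lt_compat. apply Rmult_lt_0_compat; [assumption|].
      apply pow_lt; assumption.
  - unfold phi, Nf in *. revert Hx Hy. unfold Df. intros Hx Hy.
    match goal with |- ?L = ?R =>
    assert (E : R - L = (y - x) * (Ch t * Ch t - qc sg a b * (S t * S t) - 1) *
        (Ch t - Bc sg a b / 2 * S t - sg * x * S t) /
        ((Ch t - Bc sg a b / 2 * S t - sg * y * S t) * (Ch t - Bc sg a b / 2 * S t - sg * x * S t)^2)) end.
    { unfold qc. field. split; lra. }
    rewrite Hr in E. unfold Rdiv in E. rewrite Rminus_diag, Rmult_0_r, !Rmult_0_l in E.
    lra.
Qed.

Lemma c_plus (f g : R * R -> R) p : continuous f p -> continuous g p ->
  continuous (fun q => f q + g q) p.
Proof. intros. apply (continuous_plus f g); assumption. Qed.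
Lemma c_minus (f g : R * R -> R) p : continuous f p -> continuous g p ->
  continuous (fun q => f q - g q) p.
Proof. intros. apply (continuous_minus f g); assumption. Qed.
Lemma c_mult (f g : R * R -> R) p : continuous f p -> continuous g p ->
  continuous (fun q => f q * g q) p.
Proof. intros. apply (continuous_mult f g); assumption. Qed.
Lemma c_div (f g : R * R -> R) p : continuous f p -> continuous g p -> g p <> 0 ->
  continuous (fun q => f q / g q) p.
Proof.
  intros Hf Hg Hn. apply (continuous_mult f (fun q => / g q)); [assumption|].
  apply (continuous_comp g Rinv); [assumption|]. apply continuous_Rinv; assumption.
Qed.
Lemma c_const (c : R) p : continuous (fun _ : R * R => c) p.
Proof. apply continuous_const. Qed.
Lemma c_fst x t : continuous (fun q : R * R => fst q) (x, t).
Proof. apply continuous_fst. Qed.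
Lemma c_sndf (g : R -> R) x t : continuous g t -> continuous (fun q : R * R => g (snd q)) (x, t).
Proof.
  intros H. apply (continuous_comp (fun q : R * R => snd q) g); [apply continuous_snd| exact H].
Qed.

Lemma ode_uniq (sg Bv a0 T : R) (y z : R -> R) : 0 <= T ->
  (forall t, 0 <= t <= T -> is_derive y t (sg * y t * y t + Bv * y t + a0)) ->
  (forall t, 0 <= t <= T -> is_derive z t (sg * z t * z t + Bv * z t + a0)) ->
  y 0 = z 0 -> y T = z T.
Proof.
  intros HT Hy Hz H0.
  destruct (Rle_lt_or_eq_dec 0 T HT) as [HT'|<-]; [|assumption].
  set (k := fun t => sg * (y t + z t) + Bv).
  assert (Hck : forall c, 0 <= c <= T -> continuity_pt (fun t => Rabs (k t)) c).
  { intros c Hc. apply continuity_pt_filterlim.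
    apply (continuous_comp k Rabs); [|apply continuous_Rabs].
    unfold k. apply (continuous_plus (fun t => sg * (y t + z t)) (fun _ => Bv));
      [|apply continuous_const].
    apply (continuous_mult (fun _ => sg) (fun t => y t + z t)); [apply continuous_const|].
    apply (continuous_plus y z); apply ex_derive_continuous; eexists; [apply Hy| apply Hz]; exact Hc. }
  destruct (continuity_ab_maj _ 0 T HT Hck) as [Mx [HMx _]].
  set (K := Rabs (k Mx)).
  set (h := fun t => (y t - z t) * (y t - z t) * exp (- (2 * K) * t)).
  set (hd := fun t => 2 * (y t - z t) * (y t - z t) * (k t - K) * exp (- (2 * K) * t)).
  assert (Hd : forall c, 0 <= c <= T -> derivable_pt_lim h c (hd c)).
  { intros c Hc. apply is_derive_Reals. unfold h, hd.
    specialize (Hy c Hc). specialize (Hz c Hc).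
    auto_derive.
    - repeat split; eexists; eassumption.
    - replace (Derive (fun x : R => y x) c) with (sg * y c * y c + Bv * y c + a0)
        by (symmetry; apply is_derive_unique; exact Hy).
      replace (Derive (fun x : R => z x) c) with (sg * z c * z c + Bv * z c + a0)
        by (symmetry; apply is_derive_unique; exact Hz).
      unfold k. ring. }
  destruct (MVT_cor2 h hd 0 T HT' Hd) as [c [Hc1 Hc2]].
  assert (hd c <= 0).
  { unfold hd. specialize (HMx c ltac:(lra)). fold K in HMx.
    assert (k c <= K) by (pose proof (Rle_abs (k c)); lra).
    assert (0 < exp (- (2 * K) * c)) by apply exp_pos.
    assert (0 <= (y c - z c) * (y c - z c)) by (pose proof (Rle_0_sqr (y c - z c)); unfold Rsqr in *; lra).
    assert (0 <= 2 * ((y c - z c) * (y c - z c)) * exp (- (2 * K) * c)) by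
      (apply Rmult_le_pos; [lra| lra]).
    replace (2 * (y c - z c) * (y c - z c) * (k c - K) * exp (- (2 * K) * c)) with
      ((2 * ((y c - z c) * (y c - z c)) * exp (- (2 * K) * c)) * (k c - K)) by ring.
    apply Rmult_le_0_l; lra. }
  assert (h T <= h 0).
  { assert (hd c * (T - 0) <= 0) by (apply Rmult_le_0_r; lra). lra. }
  assert (h 0 = 0) by (unfold h; rewrite H0; ring).
  assert (0 < exp (- (2 * K) * T)) by apply exp_pos.
  assert (Hsq : (y T - z T) * (y T - z T) <= 0).
  { unfold h in *. 
    assert ((y T - z T) * (y T - z T) * exp (- (2 * K) * T) <= 0) by lra.
    destruct (Rle_or_lt ((y T - z T) * (y T - z T)) 0); [assumption|].
    assert (0 < (y T - z T) * (y T - z T) * exp (- (2 * K) * T)) by (apply Rmult_lt_0_compat; lra).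
    lra. }
  assert (y T - z T = 0).
  { destruct (Req_dec (y T - z T) 0); [assumption|].
    assert (0 < (y T - z T) * (y T - z T)).
    { destruct (Rle_or_lt (y T - z T) 0). 
      - assert (y T - z T < 0) by lra. nra.
      - nra. }
    lra. }
  lra.
Qed.

Lemma qs_Fq f0 f1 l0 l1 g0 g1 y :
  qs_rhs f0 f1 l0 l1 g0 g1 y = Fq (f0 - f1) (l0 * g0 * f0) (l1 * g1 * f1) y.
Proof. unfold qs_rhs, Fq, Bc. ring. Qed.

Theorem proposition4p4 (f0 f1 l0 l1 g0 g1 : R)
  (hf0 : 0 < f0) (hf1 : 0 <= f1) (hsig : 0 < f0 - f1)
  (hl0 : 0 <= l0) (hl1 : 0 <= l1)
  (hg0 : 0 < g0 <= 1) (hg1 : 0 < g1 <= 1)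
  (u X : R -> R -> R)
  (hu : solves_cauchy f0 f1 l0 l1 g0 g1 u)
  (hX : solves_quasispecies f0 f1 l0 l1 g0 g1 X) :
  forall x t, 0 <= x <= 1 -> 0 <= t -> X x t <= u x t <= 1.
Proof.
  destruct hu as [Hreg [Hpde Hinit]].
  set (sg := f0 - f1). set (a := l0 * g0 * f0). set (b := l1 * g1 * f1).
  assert (Ha : 0 <= a) by (unfold a; apply Rmult_le_pos; [apply Rmult_le_pos|]; lra).
  assert (Hb : 0 <= b) by (unfold b; apply Rmult_le_pos; [apply Rmult_le_pos|]; lra).
  assert (Hq := qc_nonneg sg a b hsig Ha Hb).
  destruct (chs_exists _ Hq) as [Ch [S [HC0 [HS0 [HdC [HdS [Hr Hpos]]]]]]].
  set (ph := phi sg a b Ch S).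
  assert (HD : forall x t, 0 <= x <= 1 -> 0 <= t -> 0 < Df sg a b Ch S x t).
  { intros x t Hx Ht. destruct (Hpos t Ht). apply Df_pos; auto. }
  assert (Hph0 : forall x, ph x 0 = x).
  { intros x. unfold ph, phi, Nf, Df. rewrite HC0, HS0. field. }
  assert (HdtU : forall x t, 0 <= x <= 1 -> 0 <= t ->
     is_derive (fun s => u x s) t (d_t u x t)).
  { intros x t Hx Ht. destruct (Hreg x t Hx Ht) as [_ [H _]]. apply Derive_correct, H. }
  assert (HdxU : forall x t, 0 <= x <= 1 -> 0 <= t ->
     is_derive (fun y => u y t) x (d_x u x t)).
  { intros x t Hx Ht. destruct (Hreg x t Hx Ht) as [_ [_ [H _]]]. apply Derive_correct, H. }
  assert (HcU : forall x t, 0 <= x <= 1 -> 0 <= t -> cont2 u x t).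
  { intros x t Hx Ht. destruct (Hreg x t Hx Ht) as [H _]. exact H. }
  assert (Hup : forall x t, 0 <= x <= 1 -> 0 <= t -> 0 <= 1 - u x t).
  { apply (maxp sg (l0 * f0) (l1 * f1) g0 g1 (fun x t => 1 - u x t)).
    - apply Rmult_le_pos; lra.
    - apply Rmult_le_pos; lra.
    - lra.
    - lra.
    - intros x t Hx Ht. unfold cont2.
      apply (c_minus (fun _ => 1) (fun q => u (fst q) (snd q))); [apply c_const| apply HcU; assumption].
    - intros x t Hx Ht. exists (0 - d_t u x t), (0 - d_x u x t).
      split; [|split].
      + apply (is_derive_minus (fun _ => 1) (fun s => u x s)); [auto_derive; [exact I| ring]|].
        apply HdtU; lra.
      + apply (is_derive_minus (fun _ => 1) (fun y => u y t)); [auto_derive; [exact I| ring]|].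
        apply HdxU; lra.
      + specialize (Hpde x t Hx Ht). unfold J0, J1 in Hpde. unfold sg. 
        assert (E : 0 - d_t u x t + (f0 - f1) * (1 - x) * x * (0 - d_x u x t) -
          l0 * f0 * (1 - u (x + g0 * (1 - x)) t - (1 - u x t)) -
          l1 * f1 * (1 - u (x - g1 * x) t - (1 - u x t)) = 0) by lra.
        lra.
    - intros x Hx. rewrite Hinit; lra. }
  assert (HcP : forall x t, 0 <= x <= 1 -> 0 <= t -> cont2 ph x t).
  { intros x t Hx Ht. unfold cont2, ph, phi, Nf, Df.
    assert (HcC : continuous Ch t) by exact (ex_derive_continuous Ch t (ex_intro _ _ (HdC t))).
    assert (HcS : continuous S t) by exact (ex_derive_continuous S t (ex_intro _ _ (HdS t))).
    apply (c_div (fun q => a * S (snd q) + fst q * (Ch (snd q) + Bc sg a b / 2 * S (snd q)))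
                 (fun q => Ch (snd q) - Bc sg a b / 2 * S (snd q) - sg * fst q * S (snd q))).
    - apply c_plus. + apply c_mult; [apply c_const| apply c_sndf; exact HcS].
      + apply c_mult; [apply c_fst|]. apply c_plus; [apply c_sndf; exact HcC|].
        apply c_mult; [apply c_const| apply c_sndf; exact HcS].
    - apply c_minus. + apply c_minus; [apply c_sndf; exact HcC|].
        apply c_mult; [apply c_const| apply c_sndf; exact HcS].
      + apply c_mult; [apply c_mult; [apply c_const| apply c_fst]| apply c_sndf; exact HcS].
    - simpl. specialize (HD x t Hx Ht). unfold Df in HD. lra. }
  assert (Hlow : forall x t, 0 <= x <= 1 -> 0 <= t -> 0 <= u x t - ph x t).
  { apply (maxp sg (l0 * f0) (l1 * f1) g0 g1 (fun x t => u x t - ph x t)).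
    - apply Rmult_le_pos; lra.
    - apply Rmult_le_pos; lra.
    - lra.
    - lra.
    - intros x t Hx Ht. unfold cont2.
      apply (c_minus (fun q => u (fst q) (snd q)) (fun q => ph (fst q) (snd q)));
        [apply HcU| apply HcP]; assumption.
    - intros x t Hx Ht.
      assert (HDp := HD x t Hx ltac:(lra)).
      set (Dv := Df sg a b Ch S x t) in *.
      exists (d_t u x t - Fq sg a b x / Dv ^ 2), (d_x u x t - 1 / Dv ^ 2).
      split; [|split].
      + apply (is_derive_minus (fun s => u x s) (fun s => ph x s)); [apply HdtU; lra|].
        apply phi_dt; [apply HdC| apply HdS| apply Hr| apply Rgt_not_eq; exact HDp].
      + apply (is_derive_minus (fun y => u y t) (fun y => ph y t)); [apply HdxU; lra|].
        apply phi_dx; [apply Hr| apply Rgt_not_eq; exact HDp].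
      + specialize (Hpde x t Hx Ht). unfold J0, J1 in Hpde.
        set (x0 := x + g0 * (1 - x)). set (x1 := x - g1 * x).
        assert (Hx0 : 0 <= x0 <= 1).
        { unfold x0. assert (0 <= g0 * (1 - x)) by (apply Rmult_le_pos; lra).
          assert (g0 * (1 - x) <= 1 * (1 - x)) by (apply Rmult_le_compat_r; lra). lra. }
        assert (Hx1 : 0 <= x1 <= 1).
        { unfold x1. assert (0 <= g1 * x) by (apply Rmult_le_pos; lra).
          assert (g1 * x <= 1 * x) by (apply Rmult_le_compat_r; lra). lra. }
        destruct (Hpos t ltac:(lra)) as [HSt _].
        assert (C0 := phi_convex sg a b Ch S x x0 t hsig (Hr t) HSt HDp (HD x0 t Hx0 ltac:(lra))).
        assert (C1 := phi_convex sg a b Ch S x x1 t hsig (Hr t) HSt HDp (HD x1 t Hx1 ltac:(lra))).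
        fold ph Dv in C0, C1. fold x0 x1 in Hpde.
        assert (P0 : 0 <= l0 * f0 * (ph x0 t - ph x t - (x0 - x) * (1 / Dv ^ 2)))
          by (apply Rmult_le_pos; [apply Rmult_le_pos|]; lra).
        assert (P1 : 0 <= l1 * f1 * (ph x1 t - ph x t - (x1 - x) * (1 / Dv ^ 2)))
          by (apply Rmult_le_pos; [apply Rmult_le_pos|]; lra).
        match goal with |- 0 <= ?G =>
          assert (E : G = l0 * f0 * (ph x0 t - ph x t - (x0 - x) * (1 / Dv ^ 2))
                        + l1 * f1 * (ph x1 t - ph x t - (x1 - x) * (1 / Dv ^ 2))
                        + (d_t u x t + (f0 - f1) * (1 - x) * x * d_x u x t -
                           (l0 * f0 * (u x0 t - u x t) + l1 * f1 * (u x1 t - u x t)))) end.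
        { unfold x0, x1, Fq, Bc, sg, a, b. field. lra. }
        rewrite E, Hpde. lra.
    - intros x Hx. rewrite Hinit, Hph0; lra. }
  assert (HXph : forall x t, 0 <= x <= 1 -> 0 <= t -> X x t = ph x t).
  { intros x t Hx Ht. destruct (hX x Hx) as [HX0 HXd].
    apply (ode_uniq sg (Bc sg a b) a t (X x) (ph x) Ht).
    - intros s Hs. specialize (HXd s (proj1 Hs)). rewrite qs_Fq in HXd. exact HXd.
    - intros s Hs. assert (HDs := HD x s Hx (proj1 Hs)).
      assert (H := phi_dt sg a b Ch S x s (HdC s) (HdS s) (Hr s) (Rgt_not_eq _ _ HDs)).
      rewrite (phi_ode sg a b Ch S x s (Hr s) (Rgt_not_eq _ _ HDs)) in H. exact H.
    - rewrite HX0, Hph0. reflexivity. }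
  intros x t Hx Ht. rewrite (HXph x t Hx Ht).
  specialize (Hup x t Hx Ht). specialize (Hlow x t Hx Ht). lra.
Qed.
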